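(* Let $n$ be a positive integer for which Williamson type matrices of order $n$ exist. Then there exist four mutually quasi-unbiased Hadamard matrices for the parameters $(16n,16n,16,16n^2)$.
   Context: Williamson type matrices of order $n$ are four $n\times n$ $(1,-1)$-matrices $A,B,C,D$ such that $XY^\top=YX^\top$ for all $X,Y\in\{A,B,C,D\}$ and $AA^\top+BB^\top+CC^\top+DD^\top=4nI_n$. A Hadamard matrix of order $N$ is an $N\times N$ $(1,-1)$-matrix $H$ with $HH^\top=NI_N$; a weighing matrix of order $N$ and weight $k$ is an $N\times N$ $(0,1,-1)$-matrix $W$ with $WW^\top=kI_N$. Two weighing matrices (e.g. Hadamard matrices) $W_1,W_2$ of order $N$ and weight $k$ are quasi-unbiased for parameters $(N,k,l,a)$ if $\frac1{\sqrt a}W_1W_2^\top$ is a weighing matrix of order $N$ and weight $l$; mutually quasi-unbiased means pairwise. *)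

(* Defs.v *)
From HB Require Import structures.
From mathcomp Require Import all_boot all_order all_algebra.
Set Implicit Arguments. Unset Strict Implicit. Unset Printing Implicit Defensive.
Import Order.TTheory GRing.Theory Num.Theory.
Local Open Scope ring_scope.

Section Defs.
Variable R : rcfType.

Definition pm1_mx (m n : nat) (A : 'M[R]_(m, n)) : Prop :=
  forall i j, A i j = 1 \/ A i j = -1.

Definition z1m1_mx (m n : nat) (A : 'M[R]_(m, n)) : Prop :=
  forall i j, A i j = 0 \/ A i j = 1 \/ A i j = -1.

Definition williamson_type (n : nat) (A B C D : 'M[R]_n) : Prop :=
  [/\ [/\ pm1_mx A, pm1_mx B, pm1_mx C & pm1_mx D],
      (forall X Y, X \in [:: A; B; C; D] -> Y \in [:: A; B; C; D] ->
         X *m Y^T = Y *m X^T)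
    & A *m A^T + B *m B^T + C *m C^T + D *m D^T = (4 * n)%:R%:M].

Definition hadamard (N : nat) (H : 'M[R]_N) : Prop :=
  pm1_mx H /\ H *m H^T = N%:R%:M.

Definition weighing (N k : nat) (W : 'M[R]_N) : Prop :=
  z1m1_mx W /\ W *m W^T = k%:R%:M.

Definition quasi_unbiased (N k l a : nat) (W1 W2 : 'M[R]_N) : Prop :=
  [/\ weighing k W1, weighing k W2 &
      weighing l ((Num.sqrt (a%:R : R))^-1 *: (W1 *m W2^T))].

End Defs.

(* Main.v *)
Require Import Defs.
From HB Require Import structures.
From mathcomp Require Import all_boot all_order all_algebra.
From mathcomp Require Import mxtens ring zify.
Import Order.TTheory GRing.Theory Num.Theory.
Local Open Scope ring_scope.

Definition mulF (a b : nat) : nat :=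
  nth 0%N (nth [::] [:: [:: 0; 0; 0; 0]; [:: 0; 1; 2; 3]; [:: 0; 2; 3; 1]; [:: 0; 3; 1; 2]]%N a) b.
Definition ofN (k : nat) : 'I_4 :=
  match k with 0 => @Ordinal 4 0 isT | 1 => @Ordinal 4 1 isT
  | 2 => @Ordinal 4 2 isT | _ => @Ordinal 4 3 isT end.
Definition sgm (i b t : 'I_4) : 'I_4 := ofN (Nat.lxor (mulF i b) t).

Lemma sgm_inj (i b t t' : 'I_4) : (sgm i b t == sgm i b t') = (t == t').
Proof. move: i b t t'. do 4!(case=> [[|[|[|[|//]]]] ?]); reflexivity. Qed.

Lemma sgm_uniq (i j t t' b b' : 'I_4) : i != j ->
  sgm i b t == sgm j b t' -> sgm i b' t == sgm j b' t' -> b = b'.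
Proof.
move: i j t t' b b'; do 6!(case=> [[|[|[|[|//]]]] ?]); move=> //= _ _ _; exact/val_inj.
Qed.

Definition tb (T : list (list bool)) (x c : nat) := nth false (nth [::] T x) c.
Definition Sb := tb [:: [:: false; false; false; false]; [:: true; false; true; false];
                         [:: true; false; false; true]; [:: true; true; false; false]].
Definition Kb := tb [:: [:: false; false; false; false]; [:: false; true; false; true];
                         [:: false; false; true; true]; [:: false; true; true; false]].
Definition sgn1 {R : ringType} (b : bool) : R := if b then -1 else 1.
Definition Sm {R : ringType} (X : 'I_4) : 'M[R]_4 :=
  \matrix_(x, c) if ofN (Nat.lxor x c) == X then sgn1 (Sb x c) else 0.
Definition Km {R : ringType} : 'M[R]_4 := \matrix_(s, b) sgn1 (Kb s b).

Lemma Sm_skew (R : comRingType) (X Y : 'I_4) : X != Y ->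
  Sm X *m (Sm Y)^T = - ((Sm Y *m (Sm X)^T) : 'M[R]_4).
Proof.
move=> XY; apply/matrixP=> x x'; rewrite !mxE !big_ord_recr !big_ord0 /= !mxE.
move: X Y x x' XY; do 4!(case=> [[|[|[|[|//]]]] ?]); rewrite /sgn1 /= => // _; ring.
Qed.

Lemma Sm_orth (R : comRingType) (X : 'I_4) : Sm X *m (Sm X)^T = (1%:M : 'M[R]_4).
Proof.
apply/matrixP=> x x'; rewrite !mxE !big_ord_recr !big_ord0 /= !mxE.
move: X x x'; do 3!(case=> [[|[|[|[|//]]]] ?]); rewrite /sgn1 /=; ring.
Qed.

Lemma Km_orth (R : comRingType) : Km *m Km^T = ((4%:R)%:M : 'M[R]_4).
Proof.
apply/matrixP=> x x'; rewrite !mxE !big_ord_recr !big_ord0 /= !mxE.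
move: x x'; do 2!(case=> [[|[|[|[|//]]]] ?]); rewrite /sgn1 /=; ring.
Qed.

Lemma tens_suml (R : ringType) (I : Type) (r : seq I) (P : pred I) m n p q
  (A : I -> 'M[R]_(m, n)) (B : 'M[R]_(p, q)) :
  (\sum_(i <- r | P i) A i) *t B = \sum_(i <- r | P i) (A i *t B).
Proof.
apply/matrixP=> a b; rewrite mxE !summxE mulr_suml; apply: eq_bigr=> i _.
by rewrite mxE.
Qed.

Lemma tens_sumr (R : ringType) (I : Type) (r : seq I) (P : pred I) m n p q
  (A : 'M[R]_(m, n)) (B : I -> 'M[R]_(p, q)) :
  A *t (\sum_(i <- r | P i) B i) = \sum_(i <- r | P i) (A *t B i).
Proof.
apply/matrixP=> a b; rewrite mxE !summxE mulr_sumr; apply: eq_bigr=> i _.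
by rewrite mxE.
Qed.

Lemma tensNl (R : ringType) m n p q (A : 'M[R]_(m, n)) (B : 'M[R]_(p, q)) :
  (- A) *t B = - (A *t B).
Proof. by apply/matrixP=> a b; rewrite !mxE mulNr. Qed.

Lemma tensZr (R : comRingType) m n p q (A : 'M[R]_(m, n)) (c : R) (B : 'M[R]_(p, q)) :
  A *t (c *: B) = c *: (A *t B).
Proof. by apply/matrixP=> a b; rewrite !mxE mulrCA. Qed.

Lemma trmx_sum (R : ringType) (I : Type) (r : seq I) (P : pred I) m n
  (A : I -> 'M[R]_(m, n)) :
  (\sum_(i <- r | P i) A i)^T = \sum_(i <- r | P i) (A i)^T.
Proof.
apply/matrixP=> a b; rewrite mxE !summxE; apply: eq_bigr=> i _; by rewrite mxE.
Qed.

Definition Lm {R : ringType} (i X : 'I_4) : 'M[R]_(4 * 4) :=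
  \sum_(b < 4) ((\matrix_(t, c) Sm X (sgm i b t) c) *t
                (\matrix_(s, b') ((b' == b)%:R * Km s b'))).

Definition Fm {R : ringType} (i j : 'I_4) (Z : 'M[R]_4) : 'M[R]_(4 * 4) :=
  \sum_(b < 4) ((\matrix_(t, t') Z (sgm i b t) (sgm j b t')) *t
                (\matrix_(s, s') (Km s b * Km s' b))).

Lemma FmN (R : ringType) i j (Z : 'M[R]_4) : Fm i j (- Z) = - Fm i j Z.
Proof.
rewrite /Fm -sumrN; apply: eq_bigr=> b _; rewrite -tensNl; congr (_ *t _).
by apply/matrixP=> x y; rewrite !mxE.
Qed.

Lemma LL (R : comRingType) (i j X Y : 'I_4) :
  Lm i X *m (Lm j Y)^T = Fm i j (Sm X *m (Sm Y)^T) :> 'M[R]_(4 * 4).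
Proof.
rewrite /Lm /Fm trmx_sum mulmx_suml; apply: eq_bigr=> b _.
rewrite mulmx_sumr (bigD1 b) //= big1 ?addr0; last first.
  move=> b' nb; rewrite trmx_tens tensmx_mul.
  have -> : (\matrix_(s, b'0) ((b'0 == b)%:R * Km s b'0)) *m
            (\matrix_(s, b'0) ((b'0 == b')%:R * Km s b'0))^T = 0 :> 'M[R]_4.
    apply/matrixP=> s s'; rewrite !mxE; apply: big1=> c _; rewrite !mxE.
    by case: (eqVneq c b)=> [->|]; rewrite ?mul0r // eq_sym (negbTE nb) mul0r mulr0.
  by rewrite tensmx0.
rewrite trmx_tens tensmx_mul; congr (_ *t _).
  apply/matrixP=> t t'; rewrite !mxE; apply: eq_bigr=> c _; by rewrite !mxE.
apply/matrixP=> s s'; rewrite !mxE (bigD1 b) //= big1 ?addr0.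
  by rewrite !mxE eqxx !mul1r.
by move=> c nc; rewrite !mxE (negbTE nc) !mul0r.
Qed.

Lemma pair_sum (R : numFieldType) k (T : 'I_4 -> 'I_4 -> 'M[R]_k) :
  (forall X Y, X != Y -> T Y X = - T X Y) ->
  \sum_X \sum_Y T X Y = \sum_X T X X.
Proof.
move=> hT.
have h2 : (\sum_X \sum_Y T X Y) *+ 2 = (\sum_X T X X) *+ 2.
  rewrite mulr2n {2}exchange_big /= -big_split /= mulr2n -big_split /=.
  apply: eq_bigr=> X _; rewrite -big_split /= (bigD1 X) //= big1 ?addr0 //.
  by move=> Y nY; rewrite (hT X Y) ?addrN // eq_sym.
have h20 : (2%:R : R) != 0 by rewrite pnatr_eq0.
by move: h2; rewrite -!scaler_nat => /(congr1 (fun M => 2%:R^-1 *: M));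
  rewrite !scalerA mulVf // !scale1r.
Qed.

Definition Hm {R : ringType} {n} (i : 'I_4) (W : 'I_4 -> 'M[R]_n) : 'M[R]_(4 * 4 * n) :=
  \sum_X (Lm i X *t W X).

Lemma HH (R : rcfType) n (W : 'I_4 -> 'M[R]_n) (c : R) i j :
  (forall X Y, W X *m (W Y)^T = W Y *m (W X)^T) ->
  \sum_X W X *m (W X)^T = c%:M ->
  Hm i W *m (Hm j W)^T = Fm i j 1%:M *t c%:M.
Proof.
move=> hc hs; rewrite /Hm trmx_sum mulmx_suml.
transitivity (\sum_X \sum_Y (Fm i j (Sm X *m (Sm Y)^T) *t (W X *m (W Y)^T))).
  apply: eq_bigr=> X _; rewrite mulmx_sumr; apply: eq_bigr=> Y _.
  by rewrite trmx_tens tensmx_mul LL.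
rewrite pair_sum.
  by rewrite -hs tens_sumr; apply: eq_bigr=> X _; rewrite Sm_orth.
by move=> X Y nXY; rewrite Sm_skew 1?eq_sym // FmN tensNl hc.
Qed.

Lemma idx_eq m p (a b : 'I_m * 'I_p) :
  (mxtens_index a == mxtens_index b) = (a == b).
Proof. exact: (inj_eq (can_inj (@mxtens_indexK m p))). Qed.

Lemma tens_scal (R : comRingType) m p (a b : R) :
  (a%:M : 'M_m) *t (b%:M : 'M_p) = (a * b)%:M.
Proof.
apply/matrixP=> u v; case: (mxtens_indexP u)=> t s; case: (mxtens_indexP v)=> t' s'.
rewrite tensmxE !mxE idx_eq xpair_eqE.
by case: (t == t'); case: (s == s'); rewrite /= ?mulr1n ?mulr0n ?mulr0 ?mul0r.
Qed.

Lemma Km_dot (R : comRingType) (s s' : 'I_4) :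
  \sum_(b < 4) ((sgn1 (Kb s b) : R) * sgn1 (Kb s' b)) = (4%:R : R) *+ (s == s').
Proof.
have := congr1 (fun M : 'M[R]_4 => M s s') (Km_orth R); rewrite !mxE => <-.
by apply: eq_bigr=> b _; rewrite !mxE.
Qed.

Lemma Fm_diag (R : comRingType) (i : 'I_4) :
  Fm i i 1%:M = ((4%:R)%:M : 'M[R]_(4 * 4)).
Proof.
apply/matrixP=> u v; case: (mxtens_indexP u)=> t s; case: (mxtens_indexP v)=> t' s'.
rewrite /Fm summxE.
under eq_bigr do rewrite tensmxE !mxE sgm_inj.
rewrite -mulr_sumr Km_dot !mxE idx_eq xpair_eqE.
by case: (t == t'); case: (s == s'); rewrite /= ?mulr1n ?mulr0n ?mulr0 ?mul0r ?mul1r.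
Qed.

Lemma pm1M (R : ringType) (a b : R) : (a = 1 \/ a = -1) -> (b = 1 \/ b = -1) ->
  (a * b = 1 \/ a * b = -1).
Proof.
by case=> ->; case=> ->; rewrite ?mulr1 ?mul1r ?mulrN1 ?opprK; auto.
Qed.

Lemma sgn1_pm (R : ringType) b : (sgn1 b : R) = 1 \/ (sgn1 b : R) = -1.
Proof. by case: b; auto. Qed.

Lemma Km_pm (R : ringType) s b : (Km s b : R) = 1 \/ (Km s b : R) = -1.
Proof. by rewrite mxE; apply: sgn1_pm. Qed.

Lemma Fm_off (R : comRingType) (i j : 'I_4) u v : i != j ->
  let e := (Fm i j 1%:M : 'M[R]_(4 * 4)) u v in e = 0 \/ e = 1 \/ e = -1.
Proof.
move=> ij /=; case: (mxtens_indexP u)=> t s; case: (mxtens_indexP v)=> t' s'.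
rewrite /Fm summxE.
under eq_bigr do rewrite tensmxE !mxE.
case: (boolP [exists b, sgm i b t == sgm j b t']) => [/existsP [b0 hb0] | hno].
  rewrite (bigD1 b0) //= big1 ?addr0.
    rewrite hb0 mul1r; right; apply: pm1M; exact: sgn1_pm.
  move=> b nb; case: (boolP (sgm i b t == sgm j b t')) => hb; last by rewrite mul0r.
  by rewrite (sgm_uniq _ _ _ _ _ _ ij hb hb0) eqxx in nb.
left; apply: big1=> b _; case: (boolP (sgm i b t == sgm j b t')) => hb; last by rewrite mul0r.
by move: hno; rewrite negb_exists => /forallP /(_ b); rewrite hb.
Qed.

Lemma LmE (R : comRingType) (i X t s c b' : 'I_4) :
  (Lm i X : 'M[R]_(4 * 4)) (mxtens_index (t, s)) (mxtens_index (c, b')) =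
  Sm X (sgm i b' t) c * sgn1 (Kb s b').
Proof.
rewrite /Lm summxE (bigD1 b') //= big1 ?addr0.
  by rewrite tensmxE !mxE eqxx mul1r.
move=> b nb; rewrite tensmxE !mxE; have -> : (b' == b) = false by rewrite eq_sym (negbTE nb).
by rewrite mul0r mulr0.
Qed.

Lemma SmSum (R : comRingType) (x c : 'I_4) (f : 'I_4 -> R) :
  \sum_X (Sm X x c * f X) = sgn1 (Sb x c) * f (ofN (Nat.lxor x c)).
Proof.
rewrite (bigD1 (ofN (Nat.lxor x c))) //= big1 ?addr0.
  by rewrite mxE eqxx.
by move=> X nX; rewrite mxE eq_sym (negbTE nX) mul0r.
Qed.

Lemma Hm_pm1 (R : rcfType) n (i : 'I_4) (W : 'I_4 -> 'M[R]_n) :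
  (forall X, pm1_mx (W X)) -> pm1_mx (Hm i W).
Proof.
move=> hW u v.
case: (mxtens_indexP u)=> u1 p; case: (mxtens_indexP v)=> v1 q.
case: (mxtens_indexP u1)=> t s; case: (mxtens_indexP v1)=> c b'.
rewrite /Hm summxE.
under eq_bigr do rewrite tensmxE LmE mulrAC.
rewrite -mulr_suml SmSum -mulrA.
apply: pm1M; first by case: (Sb _ _); [right|left].
apply: pm1M; first exact: hW.
by case: (Kb _ _); [right|left].
Qed.

Lemma gram_tr (R : fieldType) k (H : 'M[R]_k) (c : R) : c != 0 ->
  H *m H^T = c%:M -> H^T *m H = c%:M.
Proof.
move=> c0 hH.
have h1 : H *m (c^-1 *: H^T) = 1%:M by rewrite -scalemxAr hH scale_scalar_mx mulVf.
have := mulmx1C h1; rewrite -scalemxAl => /(congr1 (fun M => c *: M)).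
by rewrite scalerA mulfV // scale1r scale_scalar_mx mulr1.
Qed.

Theorem proposition4p11 (R : rcfType) (n : nat) (hn : (0 < n)%N) :
  (exists A B C D : 'M[R]_n, williamson_type A B C D) ->
  exists H : 'I_4 -> 'M[R]_(16 * n),
    (forall i, hadamard (H i)) /\
    (forall i j, i != j ->
       quasi_unbiased (16 * n) 16 (16 * n ^ 2) (H i) (H j)).
Proof.
move=> [A [B [C [D [[pA pB pC pD] hc hs]]]]].
pose W : 'I_4 -> 'M[R]_n := fun X => nth A [:: A; B; C; D] X.
have hW : forall X, pm1_mx (W X) by case=> [[|[|[|[|//]]]] ?].
have hWc : forall X Y, W X *m (W Y)^T = W Y *m (W X)^T.
  by move=> X Y; apply: hc; apply: mem_nth; rewrite /= ltn_ord.
have hWs : \sum_X W X *m (W X)^T = ((4 * n)%:R)%:M.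
  by rewrite !big_ord_recl big_ord0 addr0 /= -hs !addrA.
have HHii : forall i, Hm i W *m (Hm i W)^T = ((16 * n)%:R)%:M.
  move=> i; rewrite (@HH R n W _ i i hWc hWs) Fm_diag tens_scal -natrM.
  by congr ((_%:R)%:M); rewrite mulnA.
have hadH : forall i, hadamard (Hm i W) by move=> i; split; [apply: Hm_pm1 | apply: HHii].
exists (fun i => Hm i W); split=> // i j ij.
have wH : forall k, weighing (16 * n) (Hm k W).
  move=> k; split; last exact: HHii.
  by move=> a b; case: (@Hm_pm1 R n k W hW a b); auto.
split; [exact: wH | exact: wH |].
have n0 : (n%:R : R) != 0 by rewrite pnatr_eq0 -lt0n.
have sq : Num.sqrt ((16 * n ^ 2)%:R : R) = (4 * n)%:R.
  rewrite (_ : (16 * n ^ 2)%:R = ((4 * n)%:R) ^+ 2 :> R) ?sqrtr_sqr ?normr_nat //.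
  by rewrite -natrX; congr (_%:R); rewrite expnMn.
rewrite sq; split.
  rewrite (@HH R n W _ i j hWc hWs) => u v.
  case: (mxtens_indexP u)=> u1 p; case: (mxtens_indexP v)=> v1 q.
  rewrite mxE tensmxE mxE.
  case: (eqVneq p q) => [_|npq]; last by rewrite mulr0n !mulr0; left.
  rewrite mulr1n mulrCA mulVf ?mulr1; last by rewrite natrM mulf_neq0 // pnatr_eq0.
  exact: Fm_off.
set M := Hm i W *m (Hm j W)^T.
have c0 : ((16 * n)%:R : R) != 0 by rewrite natrM mulf_neq0 // pnatr_eq0.
have hjj := @gram_tr R _ (Hm j W) _ c0 (HHii j).
rewrite linearZ /= -scalemxAl -scalemxAr scalerA /M trmx_mul trmxK mulmxA.
rewrite -(mulmxA (Hm i W)) hjj mul_mx_scalar -scalemxAl HHii !scale_scalar_mx.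
congr (_%:M); rewrite !natrM; field.
by rewrite n0.
Qed.
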